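(* Let $\mathbb{C}[X]^*$ be the linear dual of $\mathbb{C}[X]$ with the convolution product $(f*g)(X^n)=\sum_{k=0}^n\binom{n}{k}f(X^k)g(X^{n-k})$, let $I=\{f\in\mathbb{C}[X]^*\mid f(1)=0\}$, let $\mathbb{C}[X]^{\circ}$ be the subalgebra of those $f\in\mathbb{C}[X]^*$ vanishing on some non-zero ideal of $\mathbb{C}[X]$, and let $J=I\cap\mathbb{C}[X]^{\circ}$. Let $\widehat{\mathbb{C}[X]^\circ}=\varprojlim_n \mathbb{C}[X]^\circ/J^n$ be the $J$-adic completion, and let $\widehat{\iota}:\widehat{\mathbb{C}[X]^\circ}\to\varprojlim_n\mathbb{C}[X]^*/I^n\cong\mathbb{C}[X]^*$ be the map induced by the inclusion $\iota:\mathbb{C}[X]^\circ\subseteq\mathbb{C}[X]^*$ (with $\mathbb{C}[X]^*$ carrying the $I$-adic topology, for which it is complete). The following are equivalent: (1) $\widehat{\iota}$ is injective; (2) $\widehat{\iota}$ is a homeomorphism; (3) the $J$-adic filtration $(J^n)_{n\geq0}$ and the induced filtration $(I^n\cap\mathbb{C}[X]^\circ)_{n\geq0}$ on $\mathbb{C}[X]^\circ$ coincide; (4) the $J$-adic topology and the topology induced from the $I$-adic topology of $\mathbb{C}[X]^*$ on $\mathbb{C}[X]^\circ$ are equivalent.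
   Context: The identification $\varprojlim_n\mathbb{C}[X]^*/I^n\cong\mathbb{C}[X]^*$ comes from $\mathbb{C}[X]^*/I^{n+1}\cong(\mathbb{C}[X]_{\leq n})^*$. The completion $\widehat{\mathbb{C}[X]^\circ}$ carries the topology given by the kernels of the projections $\widehat{\mathbb{C}[X]^\circ}\to\mathbb{C}[X]^\circ/J^n$. *)

(* Defs.v *)
From HB Require Import structures.
From mathcomp Require Import all_boot all_order all_algebra.
From mathcomp Require Import complex.
From mathcomp Require Import Rstruct.
From Stdlib Require Import ClassicalEpsilon.
Set Implicit Arguments. Unset Strict Implicit. Unset Printing Implicit Defensive.
Import Order.TTheory GRing.Theory Num.Theory.
Local Open Scope ring_scope.

Definition C : fieldType := (Rdefinitions.R)[i].

(** [DF] = C[X]^dual, the linear dual of C[X]: a linear form f is determined by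
    its values f(X^n) on the monomial basis, so f is a function nat -> C
    with f n = f(X^n). *)
Definition DF := nat -> C.

Definition evalF (f : DF) (q : {poly C}) : C := \sum_(i < size q) q`_i * f i.

Definition addF (f g : DF) : DF := fun n => f n + g n.
Definition oppF (f : DF) : DF := fun n => - f n.
Definition zeroF : DF := fun _ => 0.
Definition convF (f g : DF) : DF :=
  fun n => \sum_(k < n.+1) 'C(n, k)%:R * f k * g (n - k)%N.
Definition oneF : DF := fun n => (n == 0%N)%:R.

Definition sumF (s : seq DF) : DF := foldr addF zeroF s.
Definition prodF (s : seq DF) : DF := foldr convF oneF s.

Definition Iid (f : DF) : Prop := f 0%N = 0.

Definition Cfin (f : DF) : Prop :=
  exists2 p : {poly C}, p != 0 & forall q : {poly C}, evalF f (p * q) = 0.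

Definition Jid (f : DF) : Prop := Iid f /\ Cfin f.

(** n-th power S^n of an ideal S of a (commutative) subring A of C[X]^dual,
    computed inside A: the ideal of A generated by all products of n
    elements of S, i.e. the finite sums  sum_i r_i * s_{i,1} * ... * s_{i,n}
    with r_i in A and s_{i,j} in S.  (For n = 0 this is A itself.) *)
Definition powIdeal (A S : DF -> Prop) (n : nat) (x : DF) : Prop :=
  exists s : seq (DF * seq DF),
    (forall p, List.In p s ->
       [/\ A p.1, size p.2 = n & forall y, List.In y p.2 -> S y])
    /\ x = sumF [seq convF p.1 (prodF p.2) | p <- s].

Definition allF (f : DF) : Prop := True.

Definition Ipow (n : nat) : DF -> Prop := powIdeal allF Iid n.
Definition Jpow (n : nat) : DF -> Prop := powIdeal Cfin Jid n.

(** Cosets a + J^n of C[X]^o, i.e. elements of C[X]^o / J^n, viewed as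
    subsets of DF. *)
Definition cosetJ (n : nat) (a : DF) : DF -> Prop :=
  fun y => Jpow n (addF y (oppF a)).
Definition is_cosetJ (n : nat) (X : DF -> Prop) : Prop :=
  exists2 a, Cfin a & X = cosetJ n a.

(** The J-adic completion  lim_n C[X]^o / J^n : compatible families of
    cosets (x_n)_n, x_n in C[X]^o/J^n, with x_{n+1} mapping to x_n under the
    projection C[X]^o/J^(n+1) -> C[X]^o/J^n (i.e. x_{n+1} is contained in x_n). *)
Definition is_compat (x : nat -> DF -> Prop) : Prop :=
  (forall n, is_cosetJ n (x n)) /\
  (forall n y, x n.+1 y -> x n y).
Record Compl := MkCompl { cval :> nat -> DF -> Prop ; cvalP : is_compat cval }.

(** The map hat-iota : lim C[X]^o/J^n -> lim C[X]^dual/I^n = C[X]^dual induced by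
    the inclusion C[X]^o in C[X]^dual, where the identification uses
    C[X]^dual/I^(k+1) = (C[X]_{<=k})^dual: the image g of x satisfies
    g(X^k) = a(X^k) for a representative a in C[X]^o of the coset x_{k+1}
    (independent of the choice since J^(k+1) is contained in I^(k+1), whose
    elements vanish on C[X]_{<=k}). *)
Lemma rep_ex (x : Compl) (n : nat) :
  exists a : DF, Cfin a /\ cval x n = cosetJ n a.
Proof. by case: (cvalP x) => H _; case: (H n) => a Ha E; exists a. Qed.

Definition rep (x : Compl) (n : nat) : DF :=
  proj1_sig (constructive_indefinite_description _ (rep_ex x n)).

Definition iota_hat (x : Compl) : DF := fun k => rep x k.+1 k.

(** Topology of the completion: generated by the kernels of the projections
    to C[X]^o/J^n, i.e. U is open iff for every x in U there is n such that
    every y with the same n-th projection as x is in U. *)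
Definition open_Compl (U : Compl -> Prop) : Prop :=
  forall x, U x -> exists n, forall y : Compl, cval y n = cval x n -> U y.

Definition open_Iadic (V : DF -> Prop) : Prop :=
  forall g, V g -> exists n, forall h, Ipow n (addF h (oppF g)) -> V h.

Definition open_Jadic (U : DF -> Prop) : Prop :=
  (forall f, U f -> Cfin f) /\
  forall f, U f -> exists n, forall h, Cfin h -> Jpow n (addF h (oppF f)) -> U h.

Definition open_induced (U : DF -> Prop) : Prop :=
  exists2 V, open_Iadic V & forall f, U f <-> (V f /\ Cfin f).

Definition homeo (F : Compl -> DF) : Prop :=
  bijective F /\
  (forall V, open_Iadic V -> open_Compl (fun x => V (F x))) /\
  (forall U, open_Compl U -> open_Iadic (fun g => exists2 x, U x & g = F x)).

(* Main.v *)
Require Import Defs.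
From HB Require Import structures.
From mathcomp Require Import all_boot all_order all_algebra complex Rstruct.
From mathcomp Require Import boolp.
From mathcomp Require Import ring zify.
From Stdlib Require Import FunctionalExtensionality ClassicalEpsilon.
Set Implicit Arguments. Unset Strict Implicit. Unset Printing Implicit Defensive.
Import Order.TTheory GRing.Theory Num.Theory.
Local Open Scope ring_scope.

(* Proof strategy: all four conditions are false.  We build the ring of
   sequences with the binomial convolution, show every element of C[X]^o is an
   exponential polynomial sum P_a(t) e^{at}, prove linear independence, and use
   the derivation f |-> sum_a P_a(0) (conj a - a), which kills J^2 but not
   e^{it} - 1 - it (in I^2). *)


Definition CC : numClosedFieldType := (Rdefinitions.R)[i].

Lemma fact_neq0 (n : nat) : (n`!%:R : CC) != 0.
Proof. by rewrite pnatr_eq0 -lt0n fact_gt0. Qed.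

Definition Ser := nat -> CC.
HB.instance Definition _ := Choice.copy Ser (nat -> CC).

Definition sadd (f g : Ser) : Ser := fun n => f n + g n.
Definition sopp (f : Ser) : Ser := fun n => - f n.
Definition szero : Ser := fun _ => 0.
Lemma saddA : associative sadd.
Proof. by move=> f g h; apply: functional_extensionality => n; rewrite /sadd addrA. Qed.
Lemma saddC : commutative sadd.
Proof. by move=> f g; apply: functional_extensionality => n; rewrite /sadd addrC. Qed.
Lemma sadd0 : left_id szero sadd.
Proof. by move=> f; apply: functional_extensionality => n; rewrite /sadd /szero add0r. Qed.
Lemma saddN : left_inverse szero sopp sadd.
Proof. by move=> f; apply: functional_extensionality => n; rewrite /sadd /sopp /szero addNr. Qed.
HB.instance Definition _ := GRing.isZmodule.Build Ser saddA saddC sadd0 saddN.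

Lemma serD (f g : Ser) n : (f + g) n = f n + g n. Proof. by []. Qed.
Lemma serN (f : Ser) n : (- f) n = - f n. Proof. by []. Qed.
Lemma serB (f g : Ser) n : (f - g) n = f n - g n. Proof. by []. Qed.
Lemma ser0 n : (0 : Ser) n = 0. Proof. by []. Qed.
Lemma ser_sum I (r : seq I) (P : pred I) (F : I -> Ser) n :
  (\sum_(i <- r | P i) F i) n = \sum_(i <- r | P i) F i n.
Proof.
elim: r => [|x r IH]; first by rewrite !big_nil.
by rewrite !big_cons; case: (P x) => //; rewrite serD IH.
Qed.
Lemma ser_ext (f g : Ser) : (forall n, f n = g n) -> f = g.
Proof. exact: functional_extensionality. Qed.

Definition sscale (c : CC) (f : Ser) : Ser := fun n => c * f n.
Lemma sscaleA a b v : sscale a (sscale b v) = sscale (a * b) v.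
Proof. by apply: ser_ext => n; rewrite /sscale mulrA. Qed.
Lemma sscale1 : left_id 1 sscale.
Proof. by move=> v; apply: ser_ext => n; rewrite /sscale mul1r. Qed.
Lemma sscaleDr : right_distributive sscale +%R.
Proof. by move=> a u v; apply: ser_ext => n; rewrite /sscale !serD mulrDr. Qed.
Lemma sscaleDl v : {morph sscale^~ v: a b / a + b}.
Proof. by move=> a b; apply: ser_ext => n; rewrite /sscale !serD mulrDl. Qed.
HB.instance Definition _ := GRing.Zmodule_isLmodule.Build CC Ser sscaleA sscale1 sscaleDr sscaleDl.
Lemma serZ c (f : Ser) n : (c *: f) n = c * f n. Proof. by []. Qed.

Definition tr (f : Ser) (N : nat) : {poly CC} := \poly_(i < N) (f i / i`!%:R).
Lemma coef_tr f N j : (tr f N)`_j = if (j < N)%N then f j / j`!%:R else 0.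
Proof. by rewrite coef_poly. Qed.

Definition smul (f g : Ser) : Ser :=
  fun n => \sum_(k < n.+1) 'C(n, k)%:R * f k * g (n - k)%N.
Definition sone : Ser := fun n => (n == 0%N)%:R.

Lemma coefM_dep (p p' q q' : {poly CC}) n :
  (forall j, (j <= n)%N -> p`_j = p'`_j) -> (forall j, (j <= n)%N -> q`_j = q'`_j) ->
  (p * q)`_n = (p' * q')`_n.
Proof.
move=> Hp Hq; rewrite !coefM; apply: eq_bigr => [[j /= Hj]] _.
by rewrite Hp // Hq // leq_subr.
Qed.

Lemma smulE (f g : Ser) (P Q : {poly CC}) n :
  (forall j, (j <= n)%N -> P`_j = f j / j`!%:R) ->
  (forall j, (j <= n)%N -> Q`_j = g j / j`!%:R) ->
  smul f g n = n`!%:R * (P * Q)`_n.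
Proof.
move=> HP HQ; rewrite coefM mulr_sumr /smul; apply: eq_bigr => [[k /= Hk]] _.
rewrite HP // HQ ?leq_subr //.
have Hkn : (k <= n)%N by [].
have E := bin_fact Hkn.
have F1 := fact_neq0 k; have F2 := fact_neq0 (n - k).
rewrite -E !natrM.
field.
by rewrite F1 F2.
Qed.

Lemma tr_coef_le f n j : (j <= n)%N -> (tr f n.+1)`_j = f j / j`!%:R.
Proof. by move=> H; rewrite coef_tr ltnS H. Qed.

Lemma smul_tr f g n j : (j <= n)%N -> smul f g j / j`!%:R = (tr f n.+1 * tr g n.+1)`_j.
Proof.
move=> Hj.
rewrite (@smulE f g (tr f n.+1) (tr g n.+1) j); first last.
- by move=> i Hi; rewrite tr_coef_le // (leq_trans Hi Hj).
- by move=> i Hi; rewrite tr_coef_le // (leq_trans Hi Hj).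
by rewrite mulrC mulrA mulVf ?fact_neq0 // mul1r.
Qed.

Lemma smulA : associative smul.
Proof.
move=> f g h; apply: ser_ext => n.
rewrite (@smulE f (smul g h) (tr f n.+1) (tr g n.+1 * tr h n.+1) n); first last.
- by move=> j Hj; rewrite (smul_tr _ _ Hj).
- by move=> j Hj; rewrite tr_coef_le.
rewrite (@smulE (smul f g) h (tr f n.+1 * tr g n.+1) (tr h n.+1) n); first last.
- by move=> j Hj; rewrite tr_coef_le.
- by move=> j Hj; rewrite (smul_tr _ _ Hj).
by rewrite mulrA.
Qed.

Lemma smulC : commutative smul.
Proof.
move=> f g; apply: ser_ext => n.
rewrite (@smulE f g (tr f n.+1) (tr g n.+1) n); try by move=> j Hj; rewrite tr_coef_le.
rewrite (@smulE g f (tr g n.+1) (tr f n.+1) n); try by move=> j Hj; rewrite tr_coef_le.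
by rewrite (mulrC (tr g n.+1)).
Qed.

Lemma smul1 : left_id sone smul.
Proof.
move=> f; apply: ser_ext => n.
rewrite (@smulE sone f 1 (tr f n.+1) n); first last.
- by move=> j Hj; rewrite tr_coef_le.
- move=> j Hj; rewrite coefC /sone; case: eqP => [->|_]; first by rewrite divr1.
  by rewrite mul0r.
by rewrite mul1r tr_coef_le // mulrC divfK ?fact_neq0.
Qed.

Lemma smulDl : left_distributive smul +%R.
Proof.
move=> f g h; apply: ser_ext => n.
by rewrite /smul serD -big_split /=; apply: eq_bigr => k _; rewrite serD mulrDr mulrDl.
Qed.

Lemma sone_neq0 : sone != 0.
Proof.
apply/eqP => H; have := congr1 (fun f : Ser => f 0%N) H.
by rewrite /sone /= => /eqP; rewrite oner_eq0.
Qed.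

HB.instance Definition _ := GRing.Zmodule_isComNzRing.Build Ser smulA smulC smul1 smulDl sone_neq0.

Lemma serM (f g : Ser) n : (f * g) n = \sum_(k < n.+1) 'C(n, k)%:R * f k * g (n - k)%N.
Proof. by []. Qed.
Lemma ser1 n : (1 : Ser) n = (n == 0%N)%:R. Proof. by []. Qed.

Lemma serM0 (f g : Ser) : (f * g) 0%N = f 0%N * g 0%N.
Proof. by rewrite serM big_ord1 /= mul1r subn0. Qed.

Lemma scalerAl_ser (c : CC) (f g : Ser) : c *: (f * g) = (c *: f) * g.
Proof.
apply: ser_ext => n; rewrite serZ !serM mulr_sumr; apply: eq_bigr => k _.
by rewrite serZ; ring.
Qed.
Lemma scalerAr_ser (c : CC) (f g : Ser) : c *: (f * g) = f * (c *: g).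
Proof. by rewrite mulrC scalerAl_ser mulrC. Qed.

Definition sd (f : Ser) : Ser := fun n => f n.+1.

Lemma coef_deriv_tr f N j : (j.+1 < N)%N -> (tr f N)^`()`_j = sd f j / j`!%:R.
Proof.
move=> H; rewrite coef_deriv coef_tr H /sd factS natrM -mulr_natr.
have := fact_neq0 j; have : (j.+1%:R : CC) != 0 by rewrite pnatr_eq0.
move=> H1 H2; field; by rewrite H2 [1 + _]addrC natr1 H1.
Qed.

Lemma sdM (f g : Ser) : sd (f * g) = sd f * g + f * sd g.
Proof.
apply: ser_ext => n; rewrite serD.
set P := tr f n.+2; set Q := tr g n.+2.
have HP : forall j, (j <= n.+1)%N -> P`_j = f j / j`!%:R by move=> j Hj; rewrite tr_coef_le.
have HQ : forall j, (j <= n.+1)%N -> Q`_j = g j / j`!%:R by move=> j Hj; rewrite tr_coef_le.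
change (smul f g n.+1 = smul (sd f) g n + smul f (sd g) n).
rewrite (@smulE f g P Q n.+1) //.
rewrite (@smulE (sd f) g P^`() Q n); first last.
- by move=> j Hj; apply: HQ; apply: leqW.
- by move=> j Hj; rewrite coef_deriv_tr.
rewrite (@smulE f (sd g) P Q^`() n); first last.
- by move=> j Hj; rewrite coef_deriv_tr.
- by move=> j Hj; apply: HP; apply: leqW.
rewrite -mulrDr -coefD -derivM coef_deriv factS natrM -mulr_natr.
ring.
Qed.

Lemma sdD (f g : Ser) : sd (f + g) = sd f + sd g. Proof. by []. Qed.
Lemma sdN (f : Ser) : sd (- f) = - sd f. Proof. by []. Qed.
Lemma sdB (f g : Ser) : sd (f - g) = sd f - sd g. Proof. by []. Qed.
Lemma sdZ c (f : Ser) : sd (c *: f) = c *: sd f. Proof. by []. Qed.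
Lemma sd0 : sd 0 = 0. Proof. by []. Qed.
Lemma sd_sum I (r : seq I) (F : I -> Ser) : sd (\sum_(i <- r) F i) = \sum_(i <- r) sd (F i).
Proof. by apply: ser_ext => n; rewrite /sd !ser_sum. Qed.

Definition polyE (P : {poly CC}) : Ser := fun n => n`!%:R * P`_n.
Definition expo (a : CC) : Ser := fun n => a ^+ n.

Lemma polyEM P Q : polyE (P * Q) = polyE P * polyE Q.
Proof.
apply: ser_ext => n; change ((polyE P * polyE Q) n) with (smul (polyE P) (polyE Q) n).
by rewrite (@smulE _ _ P Q n) // => j _; rewrite /polyE; field; exact: fact_neq0.
Qed.
Lemma polyED P Q : polyE (P + Q) = polyE P + polyE Q.
Proof. by apply: ser_ext => n; rewrite serD /polyE coefD mulrDr. Qed.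
Lemma polyEN P : polyE (- P) = - polyE P.
Proof. by apply: ser_ext => n; rewrite serN /polyE coefN mulrN. Qed.
Lemma polyEZ c P : polyE (c *: P) = c *: polyE P.
Proof. by apply: ser_ext => n; rewrite serZ /polyE coefZ; ring. Qed.
Lemma polyE0 : polyE 0 = 0.
Proof. by apply: ser_ext => n; rewrite /polyE coef0 mulr0. Qed.
Lemma polyE1 : polyE 1 = 1.
Proof. by apply: ser_ext => n; rewrite /polyE coef1 ser1; case: n => [|n] /=; rewrite ?mulr1 ?mulr0. Qed.
Lemma polyE_sum I (r : seq I) (F : I -> {poly CC}) : polyE (\sum_(i <- r) F i) = \sum_(i <- r) polyE (F i).
Proof.
elim: r => [|x r IH]; first by rewrite !big_nil polyE0.
by rewrite !big_cons polyED IH.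
Qed.
Lemma sd_polyE P : sd (polyE P) = polyE P^`().
Proof.
apply: ser_ext => n; rewrite /sd /polyE coef_deriv factS natrM -mulr_natr; ring.
Qed.
Lemma expo0 : expo 0 = 1.
Proof. by apply: ser_ext => n; rewrite /expo ser1 expr0n. Qed.
Lemma sd_expo a : sd (expo a) = a *: expo a.
Proof. by apply: ser_ext => n; rewrite /sd /expo serZ exprS. Qed.

Lemma ode_uniq (a : CC) (h : Ser) : sd h = a *: h -> h = h 0%N *: expo a.
Proof.
move=> H; apply: ser_ext => n; rewrite serZ /expo.
elim: n => [|n IH]; first by rewrite expr0 mulr1.
have := congr1 (fun f : Ser => f n) H; rewrite /sd serZ /= => ->.
by rewrite IH exprS; ring.
Qed.

Lemma expoD a b : expo (a + b) = expo a * expo b.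
Proof.
set h := expo a * expo b.
have Hh : sd h = (a + b) *: h.
  by rewrite /h sdM !sd_expo -scalerAl_ser -scalerAr_ser scalerDl.
have He : sd (expo (a + b)) = (a + b) *: expo (a + b) by rewrite sd_expo.
have E1 := ode_uniq Hh; have E2 := ode_uniq He.
have E3 : h 0%N = expo (a + b) 0%N by rewrite /h serM0 /expo !expr0 mulr1.
apply: (etrans E2); apply: esym; apply: (etrans E1); by rewrite E3.
Qed.

Definition ep (a : CC) (P : {poly CC}) : Ser := polyE P * expo a.

Lemma epD a P Q : ep a (P + Q) = ep a P + ep a Q.
Proof. by rewrite /ep polyED mulrDl. Qed.
Lemma epN a P : ep a (- P) = - ep a P.
Proof. by rewrite /ep polyEN mulNr. Qed.
Lemma epB a P Q : ep a (P - Q) = ep a P - ep a Q.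
Proof. by rewrite epD epN. Qed.
Lemma epZ a c P : ep a (c *: P) = c *: ep a P.
Proof. by rewrite /ep polyEZ scalerAl_ser. Qed.
Lemma ep0 a : ep a 0 = 0.
Proof. by rewrite /ep polyE0 mul0r. Qed.
Lemma ep_sum a I (r : seq I) (F : I -> {poly CC}) : ep a (\sum_(i <- r) F i) = \sum_(i <- r) ep a (F i).
Proof.
elim: r => [|x r IH]; first by rewrite !big_nil ep0.
by rewrite !big_cons epD IH.
Qed.
Lemma epM a b P Q : ep a P * ep b Q = ep (a + b) (P * Q).
Proof. by rewrite /ep polyEM expoD; ring. Qed.
Lemma ep_at0 a P : ep a P 0%N = P`_0.
Proof. by rewrite /ep serM0 /polyE /expo expr0 mulr1 mul1r. Qed.
Lemma ep_zero P : ep 0 P = polyE P.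
Proof. by rewrite /ep expo0 mulr1. Qed.
Lemma sd_ep a P : sd (ep a P) = ep a (P^`() + a *: P).
Proof. by rewrite epD epZ /ep sdM sd_polyE sd_expo scalerAr_ser. Qed.

Definition opL (c : CC) (f : Ser) : Ser := sd f - c *: f.
Lemma opLD c f g : opL c (f + g) = opL c f + opL c g.
Proof. by rewrite /opL sdD scalerDr; ring. Qed.
Lemma opL0 c : opL c 0 = 0.
Proof. by rewrite /opL sd0 scaler0 subr0. Qed.
Lemma opLB c f g : opL c (f - g) = opL c f - opL c g.
Proof. by rewrite /opL sdB scalerBr; ring. Qed.
Lemma opL_sum c I (r : seq I) (F : I -> Ser) : opL c (\sum_(i <- r) F i) = \sum_(i <- r) opL c (F i).
Proof.
elim: r => [|x r IH]; first by rewrite !big_nil opL0.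
by rewrite !big_cons opLD IH.
Qed.
Lemma opL_ep c b P : opL c (ep b P) = ep b (P^`() + (b - c) *: P).
Proof. by rewrite /opL sd_ep -epZ -epB scalerBl; congr ep; ring. Qed.

Lemma ep_eq0 a P : ep a P = 0 -> P = 0.
Proof.
move=> H; have := congr1 (fun f => f * ep (- a) 1) H.
rewrite mul0r epM mulr1 subrr ep_zero => H2.
apply/polyP => n; have := congr1 (fun f : Ser => f n) H2.
rewrite /polyE ser0 coef0 => /eqP; rewrite mulf_eq0 (negbTE (fact_neq0 n)) /=.
by move/eqP.
Qed.

Definition seqof (l : seq (CC * {poly CC})) : Ser := \sum_(x <- l) ep x.1 x.2.
Lemma seqof_cat l1 l2 : seqof (l1 ++ l2) = seqof l1 + seqof l2.
Proof. by rewrite /seqof big_cat. Qed.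
Definition negl (l : seq (CC * {poly CC})) := [seq (x.1, - x.2) | x <- l].
Lemma seqof_neg l : seqof (negl l) = - seqof l.
Proof.
rewrite /seqof big_map /= -sumrN; apply: eq_bigr => x _; exact: epN.
Qed.
Definition prodl (l1 l2 : seq (CC * {poly CC})) :=
  [seq (x.1 + y.1, x.2 * y.2) | x <- l1, y <- l2].
Lemma seqof_prod l1 l2 : seqof (prodl l1 l2) = seqof l1 * seqof l2.
Proof.
rewrite /seqof /prodl big_allpairs_dep /= mulr_suml; apply: eq_bigr => x _.
rewrite mulr_sumr; apply: eq_bigr => y _; by rewrite epM.
Qed.

Definition evalS (f : Ser) (q : {poly CC}) : CC := \sum_(i < size q) q`_i * f i.

Lemma evalS_wide f (q : {poly CC}) N : (size q <= N)%N -> evalS f q = \sum_(i < N) q`_i * f i.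
Proof.
move=> H; rewrite /evalS (big_ord_widen N (fun i => q`_i * f i) H) big_mkcond /=.
apply: eq_bigr => i _; case: ifP => // Hi.
by rewrite nth_default ?mul0r // leqNgt Hi.
Qed.

Lemma evalSD f p q : evalS f (p + q) = evalS f p + evalS f q.
Proof.
set N := maxn (size p) (size q).
rewrite (@evalS_wide f (p + q) N) ?(leq_trans (size_polyD _ _)) //.
rewrite (@evalS_wide f p N) ?leq_maxl // (@evalS_wide f q N) ?leq_maxr //.
by rewrite -big_split /=; apply: eq_bigr => i _; rewrite coefD mulrDl.
Qed.
Lemma evalSN f p : evalS f (- p) = - evalS f p.
Proof.
rewrite /evalS size_polyN -sumrN; apply: eq_bigr => i _; by rewrite coefN mulNr.
Qed.
Lemma evalSB f p q : evalS f (p - q) = evalS f p - evalS f q.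
Proof. by rewrite evalSD evalSN. Qed.
Lemma evalSCM f c q : evalS f (c%:P * q) = c * evalS f q.
Proof.
rewrite (@evalS_wide f _ (size q)); last first.
  apply: leq_trans (size_mul_leq _ _) _; rewrite size_polyC; case: (c != 0) => /=; [by [] | exact: leq_pred].
rewrite /evalS mulr_sumr; apply: eq_bigr => i _; by rewrite coefCM mulrA.
Qed.
Lemma evalSXM f q : evalS f ('X * q) = evalS (sd f) q.
Proof.
rewrite (@evalS_wide f _ (size q).+1); last first.
  by rewrite (leq_trans (size_mul_leq _ _)) // size_polyX.
rewrite big_ord_recl coefXM /= mul0r add0r; apply: eq_bigr => i _.
by rewrite coefXM.
Qed.
Lemma evalS_fD f g q : evalS (f + g) q = evalS f q + evalS g q.
Proof. by rewrite /evalS -big_split /=; apply: eq_bigr => i _; rewrite serD mulrDr. Qed.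
Lemma evalS_fZ c f q : evalS (c *: f) q = c * evalS f q.
Proof. by rewrite /evalS mulr_sumr; apply: eq_bigr => i _; rewrite serZ; ring. Qed.
Lemma evalS_fN f q : evalS (- f) q = - evalS f q.
Proof. by rewrite /evalS -sumrN; apply: eq_bigr => i _; rewrite serN mulrN. Qed.
Lemma evalS_f0 q : evalS 0 q = 0.
Proof. by rewrite /evalS big1 // => i _; rewrite ser0 mulr0. Qed.
Lemma evalS_opL c f q : evalS f (('X - c%:P) * q) = evalS (opL c f) q.
Proof.
rewrite mulrBl evalSB evalSXM evalSCM /opL evalS_fD evalS_fN evalS_fZ; ring.
Qed.
Lemma evalS_Xn f n : evalS f 'X^n = f n.
Proof.
rewrite (@evalS_wide f _ n.+1) ?size_polyXn // big_ord_recr /= coefXn eqxx mul1r big1 ?add0r //.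
by move=> [i Hi] _; rewrite coefXn /= (ltn_eqF Hi) mul0r.
Qed.

Definition Ann (p : {poly CC}) (f : Ser) := forall q, evalS f (p * q) = 0.

Lemma Ann_opL c p f : Ann (('X - c%:P) * p) f <-> Ann p (opL c f).
Proof. by split=> H q; [rewrite -evalS_opL mulrA | rewrite -mulrA evalS_opL]. Qed.
Lemma Ann_mulr p r f : Ann p f -> Ann (p * r) f.
Proof. by move=> H q; rewrite -mulrA. Qed.
Lemma Ann_mull p r f : Ann p f -> Ann (r * p) f.
Proof. by move=> H; rewrite mulrC; apply: Ann_mulr. Qed.
Lemma AnnD p f g : Ann p f -> Ann p g -> Ann p (f + g).
Proof. by move=> Hf Hg q; rewrite evalS_fD Hf Hg addr0. Qed.
Lemma Ann0 p : Ann p 0.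
Proof. by move=> q; rewrite evalS_f0. Qed.
Lemma Ann_const c f : c != 0 -> Ann c%:P f -> f = 0.
Proof.
move=> Hc H; apply: ser_ext => n; have := H 'X^n.
rewrite evalSCM evalS_Xn ser0 => /eqP; rewrite mulf_eq0 (negbTE Hc) /=; by move/eqP.
Qed.

Lemma size_deriv_le (P : {poly CC}) : (size P^`() <= (size P).-1)%N.
Proof.
have [->|HP] := eqVneq P 0; first by rewrite deriv0 size_poly0.
by rewrite -ltnS (ltn_predK (lt_size_deriv HP)) lt_size_deriv.
Qed.

Lemma ep_Ann_k a k (P : {poly CC}) : (size P <= k)%N -> Ann (('X - a%:P) ^+ k) (ep a P).
Proof.
elim: k P => [|k IH] P HP.
  by move: HP; rewrite leqn0 size_poly_eq0 => /eqP ->; rewrite ep0; apply: Ann0.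
rewrite exprS; apply/Ann_opL; rewrite opL_ep subrr scale0r addr0.
apply: IH; apply: leq_trans (size_deriv_le P) _; by rewrite -subn1 leq_subLR add1n.
Qed.
Lemma ep_Ann a (P : {poly CC}) : Ann (('X - a%:P) ^+ (size P)) (ep a P).
Proof. exact: ep_Ann_k. Qed.

Lemma seqof_Ann l : exists2 p, p != 0 & Ann p (seqof l).
Proof.
elim: l => [|x l [p Hp HA]]; first by exists 1; rewrite ?oner_eq0 // /seqof big_nil; apply: Ann0.
exists (('X - x.1%:P) ^+ (size x.2) * p).
  by rewrite mulf_neq0 // expf_neq0 // polyXsubC_eq0.
rewrite /seqof big_cons; apply: AnnD; first by apply: Ann_mulr; apply: ep_Ann.
by apply: Ann_mull.
Qed.

Lemma solve1 (c : CC) : c != 0 -> forall Q : {poly CC}, exists R : {poly CC}, R^`() + c *: R = Q.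
Proof.
move=> Hc Q; move: {2}(size Q) (leqnn (size Q)) => k.
elim: k Q => [|k IH] Q HQ.
  by exists 0; move: HQ; rewrite leqn0 size_poly_eq0 => /eqP ->; rewrite deriv0 scaler0 addr0.
have [->|HQ0] := eqVneq Q 0; first by exists 0; rewrite deriv0 scaler0 addr0.
have [R1 HR1] : exists R1 : {poly CC}, R1^`() + c *: R1 = Q^`().
  apply: IH; rewrite -ltnS; exact: leq_trans (lt_size_deriv HQ0) HQ.
exists (c^-1 *: (Q - R1)).
rewrite derivZ derivB -HR1 scalerA mulfV // scale1r scalerBr scalerDr scalerA mulVf //.
rewrite scale1r; set u := R1^`(); set v := c^-1 *: u; ring.
Qed.

Lemma integ_ex (Q : {poly CC}) : exists R : {poly CC}, R^`() = Q.
Proof.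
exists (\poly_(i < (size Q).+1) (if i is j.+1 then Q`_j / j.+1%:R else 0)).
apply/polyP => i; rewrite coef_deriv coef_poly ltnS.
case: ltnP => Hi.
  have Hn : (i.+1%:R : CC) != 0 by rewrite pnatr_eq0.
  by rewrite -(mulr_natr (Q`_i / _)) divfK.
by rewrite mul0rn nth_default.
Qed.

Lemma seqof1 x : seqof [:: x] = ep x.1 x.2.
Proof. by rewrite /seqof big_seq1. Qed.
Lemma seqof_nil : seqof [::] = 0.
Proof. by rewrite /seqof big_nil. Qed.
Lemma seqof_cons x l : seqof (x :: l) = ep x.1 x.2 + seqof l.
Proof. by rewrite /seqof big_cons. Qed.

Lemma solve_ep a b Q : exists l, opL a (seqof l) = ep b Q.
Proof.
have [<-|Hba] := eqVneq b a.
  have [R HR] := integ_ex Q; exists [:: (b, R)].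
  by rewrite seqof1 opL_ep /= subrr scale0r addr0 HR.
have Hc : b - a != 0 by rewrite subr_eq0.
have [R HR] := solve1 Hc Q; exists [:: (b, R)].
by rewrite seqof1 opL_ep /= HR.
Qed.

Lemma solve_list a l : exists l', opL a (seqof l') = seqof l.
Proof.
elim: l => [|x l [l2 H2]]; first by exists [::]; rewrite seqof_nil opL0.
have [l1 H1] := solve_ep a x.1 x.2.
by exists (l1 ++ l2); rewrite seqof_cat opLD H1 H2 seqof_cons.
Qed.

Lemma epC a c : ep a c%:P = c *: expo a.
Proof. by rewrite -alg_polyC epZ /ep polyE1 mul1r. Qed.

Lemma Ann_seqof_k k (p : {poly CC}) f : (size p <= k)%N -> p != 0 -> Ann p f ->
  exists l, f = seqof l.
Proof.
elim: k p f => [|k IH] p f Hs Hp HA.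
  by move: Hs; rewrite leqn0 size_poly_eq0 (negbTE Hp).
have [Hs1|Hs1] := eqVneq (size p) 1%N.
  have Ep : p = (p`_0)%:P by apply: size1_polyC; rewrite Hs1.
  have Hc : p`_0 != 0 by move: Hp; rewrite {1}Ep polyC_eq0.
  rewrite Ep in HA; exists [::]; rewrite seqof_nil; exact: Ann_const Hc HA.
have [a Ha] := closed_rootP p Hs1.
have [q Eq] := factor_theorem p a Ha.
have Hq : q != 0 by apply: contraNneq Hp => E; rewrite Eq E mul0r.
have Hsq : (size q <= k)%N.
  move: Hs; rewrite Eq size_Mmonic ?monicXsubC // size_XsubC addn2 /=; by [].
have HA' : Ann (('X - a%:P) * q) f by rewrite mulrC -Eq.
have [l Hl] := IH q (opL a f) Hsq Hq (proj1 (Ann_opL _ _ _) HA').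
have [l' Hl'] := solve_list a l.
set h := f - seqof l'.
have Hh : sd h = a *: h.
  have : opL a h = 0 by rewrite /h opLB Hl Hl' subrr.
  by rewrite /opL => /eqP; rewrite subr_eq0 => /eqP.
exists ((a, (h 0%N)%:P) :: l'); rewrite seqof_cons /= epC -(ode_uniq Hh) /h.
by rewrite subrK.
Qed.

Lemma Ann_seqof (p : {poly CC}) f : p != 0 -> Ann p f -> exists l, f = seqof l.
Proof. exact: (@Ann_seqof_k (size p)). Qed.

(* linear independence of exponential polynomials *)
Definition trP (c b : CC) (P : {poly CC}) : {poly CC} := P^`() + (b - c) *: P.
Definition tpIt (cs : seq CC) N b P := foldr (fun c P => iter N (trP c b) P) P cs.
Definition opIt (cs : seq CC) N f := foldr (fun c g => iter N (opL c) g) f cs.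

Lemma iter_opL_ep N c b P : iter N (opL c) (ep b P) = ep b (iter N (trP c b) P).
Proof. by elim: N => //= N ->; rewrite opL_ep. Qed.
Lemma opIt_ep cs N b P : opIt cs N (ep b P) = ep b (tpIt cs N b P).
Proof. by elim: cs => //= c cs ->; rewrite iter_opL_ep. Qed.
Lemma iter_opLD N c f g : iter N (opL c) (f + g) = iter N (opL c) f + iter N (opL c) g.
Proof. by elim: N => //= N ->; rewrite opLD. Qed.
Lemma iter_opL0 N c : iter N (opL c) 0 = 0.
Proof. by elim: N => //= N ->; rewrite opL0. Qed.
Lemma opItD cs N f g : opIt cs N (f + g) = opIt cs N f + opIt cs N g.
Proof. by elim: cs => //= c cs ->; rewrite iter_opLD. Qed.
Lemma opIt0 cs N : opIt cs N 0 = 0.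
Proof. by elim: cs => //= c cs ->; rewrite iter_opL0. Qed.
Lemma opIt_sum cs N I (r : seq I) (F : I -> Ser) : opIt cs N (\sum_(i <- r) F i) = \sum_(i <- r) opIt cs N (F i).
Proof.
elim: r => [|x r IH]; first by rewrite !big_nil opIt0.
by rewrite !big_cons opItD IH.
Qed.

Lemma size_trP c b P : (size (trP c b P) <= size P)%N.
Proof.
rewrite /trP; apply: leq_trans (size_polyD _ _) _; rewrite geq_max size_scale_leq andbT.
apply: leq_trans (size_deriv_le P) _; exact: leq_pred.
Qed.
Lemma size_trP_eq c b P : b != c -> size (trP c b P) = size P.
Proof.
move=> Hbc; have [->|HP] := eqVneq P 0; first by rewrite /trP deriv0 scaler0 addr0.
have Hs : size ((b - c) *: P) = size P by rewrite size_scale // subr_eq0.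
rewrite /trP addrC size_polyDl // Hs; exact: lt_size_deriv.
Qed.
Lemma trP0 c b : trP c b 0 = 0.
Proof. by rewrite /trP deriv0 scaler0 addr0. Qed.
Lemma size_iter_trP N c b P : (size (iter N (trP c b) P) <= size P)%N.
Proof. elim: N => //= N IH; exact: leq_trans (size_trP _ _ _) IH. Qed.
Lemma size_tpIt cs N b P : (size (tpIt cs N b P) <= size P)%N.
Proof. elim: cs => //= c cs IH; exact: leq_trans (size_iter_trP _ _ _ _) IH. Qed.
Lemma size_iter_trP_eq N c b P : b != c -> size (iter N (trP c b) P) = size P.
Proof. by move=> Hbc; elim: N => //= N <-; exact: size_trP_eq. Qed.
Lemma tpIt_notin cs N b P : b \notin cs -> size (tpIt cs N b P) = size P.
Proof.
elim: cs => //= c cs IH; rewrite in_cons negb_or => /andP [Hbc Hcs].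
by rewrite size_iter_trP_eq // IH.
Qed.
Lemma iter_trP0 N c b : iter N (trP c b) 0 = 0.
Proof. by elim: N => //= N ->; rewrite trP0. Qed.
Lemma iter_trP_deriv N b P : iter N (trP b b) P = P^`(N).
Proof. by elim: N => //= N ->; rewrite /trP subrr scale0r addr0. Qed.
Lemma tpIt_in cs N b (P : {poly CC}) : b \in cs -> (size P <= N)%N -> tpIt cs N b P = 0.
Proof.
move=> Hb HN; elim: cs Hb => //= c cs IH; rewrite in_cons.
have [<-|Hbc] := eqVneq b c => /= Hb.
  rewrite iter_trP_deriv derivn_poly0 //; exact: leq_trans (size_tpIt _ _ _ _) HN.
by rewrite IH // iter_trP0.
Qed.

Lemma indep_key a0 (Q : {poly CC}) l :
  (forall x, x \in l -> x.1 != a0) -> ep a0 Q + seqof l = 0 -> Q = 0.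
Proof.
move=> Hl H.
set N := \sum_(x <- l) size x.2.
set cs := [seq x.1 | x <- l].
have := congr1 (opIt cs N) H; rewrite opIt0 opItD opIt_ep.
have -> : opIt cs N (seqof l) = 0.
  rewrite /seqof opIt_sum big_seq big1 // => x Hx.
  rewrite opIt_ep tpIt_in ?ep0 //; first by apply: map_f.
  by rewrite /N (big_rem x Hx) /= leq_addr.
rewrite addr0 => /ep_eq0 H0.
have Ha : a0 \notin cs.
  apply/mapP => [[x Hx Ex]]; have := Hl x Hx; by rewrite Ex eqxx.
apply/eqP; rewrite -size_poly_eq0 -(tpIt_notin N Q Ha) H0 size_poly0 //.
Qed.



Definition psi (a : CC) : CC := a^* - a.
Lemma psiD a b : psi (a + b) = psi a + psi b.
Proof. by rewrite /psi (rmorphD (@Num.conj_op CC) a b); ring. Qed.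
Definition Dpsi (l : seq (CC * {poly CC})) : CC := \sum_(x <- l) x.2`_0 * psi x.1.
Definition vl (l : seq (CC * {poly CC})) : CC := \sum_(x <- l) x.2`_0.

Lemma vl_seqof l : vl l = seqof l 0%N.
Proof. by rewrite /seqof ser_sum /vl; apply: eq_bigr => x _; rewrite ep_at0. Qed.

Lemma ep_sumP a I (r : seq I) (P : pred I) (F : I -> {poly CC}) :
  ep a (\sum_(i <- r | P i) F i) = \sum_(i <- r | P i) ep a (F i).
Proof. exact: (big_morph (ep a) (epD a) (ep0 a)). Qed.

Lemma seqof_split a0 l : seqof l =
  ep a0 (\sum_(y <- l | y.1 == a0) y.2) + seqof [seq y <- l | y.1 != a0].
Proof.
rewrite {1}/seqof (bigID (fun y => y.1 == a0)) /= ep_sumP /seqof big_filter.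
by congr (_ + _); apply: eq_bigr => y /eqP ->.
Qed.
Lemma Dpsi_split a0 l : Dpsi l =
  (\sum_(y <- l | y.1 == a0) y.2)`_0 * psi a0 + Dpsi [seq y <- l | y.1 != a0].
Proof.
rewrite {1}/Dpsi (bigID (fun y => y.1 == a0)) /= coef_sum mulr_suml /Dpsi big_filter.
by congr (_ + _); apply: eq_bigr => y /eqP ->.
Qed.
Lemma Dpsi_zero_k k l : (size l <= k)%N -> seqof l = 0 -> Dpsi l = 0.
Proof.
elim: k l => [|k IH] [|x l] //= Hs H; try by rewrite /Dpsi big_nil.
set a0 := x.1.
have Hf : forall y, y \in [seq y <- x :: l | y.1 != a0] -> y.1 != a0.
  by move=> y; rewrite mem_filter => /andP [].
have HQ := indep_key Hf (etrans (esym (seqof_split a0 (x :: l))) H).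
move: H; rewrite (seqof_split a0) HQ ep0 add0r => H.
rewrite (Dpsi_split a0) HQ coef0 mul0r add0r; apply: IH H.
by rewrite /= /a0 eqxx /= size_filter (leq_trans (count_size _ _)).
Qed.

Lemma Dpsi_zero l : seqof l = 0 -> Dpsi l = 0.
Proof. exact: Dpsi_zero_k. Qed.

Lemma Dpsi_cat l1 l2 : Dpsi (l1 ++ l2) = Dpsi l1 + Dpsi l2.
Proof. by rewrite /Dpsi big_cat. Qed.
Lemma Dpsi_neg l : Dpsi (negl l) = - Dpsi l.
Proof. by rewrite /Dpsi big_map -sumrN; apply: eq_bigr => x _; rewrite coefN mulNr. Qed.
Lemma Dpsi_eq l1 l2 : seqof l1 = seqof l2 -> Dpsi l1 = Dpsi l2.
Proof.
move=> H; have : seqof (l1 ++ negl l2) = 0 by rewrite seqof_cat seqof_neg H subrr.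
move/Dpsi_zero; rewrite Dpsi_cat Dpsi_neg => /eqP; rewrite subr_eq0; by move/eqP.
Qed.

Lemma vl_prod l1 l2 : vl (prodl l1 l2) = vl l1 * vl l2.
Proof.
rewrite /vl /prodl big_allpairs_dep /= mulr_suml; apply: eq_bigr => x _.
by rewrite mulr_sumr; apply: eq_bigr => y _; rewrite coef0M.
Qed.
Lemma Dpsi_prod l1 l2 : Dpsi (prodl l1 l2) = vl l2 * Dpsi l1 + vl l1 * Dpsi l2.
Proof.
have E1 : vl l2 * Dpsi l1 = \sum_(x <- l1) vl l2 * (x.2`_0 * psi x.1) by rewrite /Dpsi mulr_sumr.
have E2 : vl l1 * Dpsi l2 = \sum_(x <- l1) x.2`_0 * Dpsi l2 by rewrite /vl mulr_suml.
rewrite E1 E2 -big_split /Dpsi /prodl big_allpairs_dep /=; apply: eq_bigr => x _.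
rewrite /vl mulr_suml mulr_sumr -big_split /=; apply: eq_bigr => y _.
by rewrite coef0M psiD; ring.
Qed.



Lemma convF_E (f g : DF) : convF f g = ((f : Ser) * (g : Ser) : Ser).
Proof. by []. Qed.
Lemma addF_E (f g : DF) : addF f g = ((f : Ser) + (g : Ser) : Ser).
Proof. by []. Qed.
Lemma oppF_E (f : DF) : oppF f = (- (f : Ser) : Ser).
Proof. by []. Qed.
Lemma zeroF_E : zeroF = (0 : Ser).
Proof. by []. Qed.
Lemma oneF_E : oneF = (1 : Ser).
Proof. by []. Qed.
Lemma sumF_E (s : seq DF) : sumF s = \sum_(x <- s) (x : Ser).
Proof. elim: s => [|x s IH]; first by rewrite big_nil. by rewrite big_cons /= IH. Qed.
Lemma prodF_E (s : seq DF) : prodF s = \prod_(x <- s) (x : Ser).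
Proof. elim: s => [|x s IH]; first by rewrite big_nil. by rewrite big_cons /= IH. Qed.
Lemma Cfin_E (f : DF) : Cfin f <-> exists2 p : {poly CC}, p != 0 & Ann p f.
Proof. by []. Qed.

Lemma Cfin_seqof (f : Ser) : Cfin f <-> exists l, f = seqof l.
Proof.
split; first by move=> [p Hp HA]; exact: Ann_seqof Hp HA.
by move=> [l ->]; have [p Hp HA] := seqof_Ann l; exists p.
Qed.
Lemma CfinD (f g : Ser) : Cfin f -> Cfin g -> Cfin (f + g).
Proof.
move=> /Cfin_seqof [l1 ->] /Cfin_seqof [l2 ->]; apply/Cfin_seqof.
by exists (l1 ++ l2); rewrite seqof_cat.
Qed.
Lemma CfinM (f g : Ser) : Cfin f -> Cfin g -> Cfin (f * g).
Proof.
move=> /Cfin_seqof [l1 ->] /Cfin_seqof [l2 ->]; apply/Cfin_seqof.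
by exists (prodl l1 l2); rewrite seqof_prod.
Qed.
Lemma Cfin_ep a P : Cfin (ep a P).
Proof. by apply/Cfin_seqof; exists [:: (a, P)]; rewrite seqof1. Qed.
Lemma Cfin0 : Cfin (0 : Ser).
Proof. by apply/Cfin_seqof; exists [::]; rewrite seqof_nil. Qed.
Lemma CfinZ c (f : Ser) : Cfin f -> Cfin (c *: f).
Proof.
move=> Hf; have -> : c *: f = ep 0 c%:P * f.
  rewrite epC expo0 -scalerAl_ser mul1r. done.
by apply: CfinM => //; apply: Cfin_ep.
Qed.
Lemma CfinN (f : Ser) : Cfin f -> Cfin (- f).
Proof. by move=> Hf; rewrite -scaleN1r; apply: CfinZ. Qed.

Definition tau : Ser := polyE 'X.
Lemma tau0 : tau 0%N = 0.
Proof. by rewrite /tau /polyE coefX /= mulr0. Qed.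
Lemma Cfin_tau : Cfin tau.
Proof. by rewrite /tau -ep_zero; apply: Cfin_ep. Qed.
Lemma polyEX n : polyE 'X^n = tau ^+ n.
Proof.
elim: n => [|n IH]; first by rewrite !expr0 polyE1.
by rewrite !exprS polyEM IH.
Qed.

Definition vanish (f : Ser) n := forall k, (k < n)%N -> f k = 0.
Lemma vanishM f g i j : vanish f i -> vanish g j -> vanish (f * g) (i + j).
Proof.
move=> Hf Hg k Hk; rewrite serM big1 // => [[m Hm]] _ /=.
have [Hmi|Hmi] := ltnP m i; first by rewrite Hf // mulr0 mul0r.
rewrite Hg ?mulr0 //; lia.
Qed.
Lemma vanishD f g n : vanish f n -> vanish g n -> vanish (f + g) n.
Proof. by move=> Hf Hg k Hk; rewrite serD Hf // Hg // addr0. Qed.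
Lemma vanish0 f : vanish f 0.
Proof. by []. Qed.
Lemma vanish_mulr f g n : vanish g n -> vanish (f * g) n.
Proof. by move=> Hg; rewrite -(add0n n); apply: vanishM. Qed.

Lemma pow_vanish A S n (x : Ser) : (forall y : DF, S y -> y 0%N = 0) -> powIdeal A S n x -> vanish x n.
Proof.
move=> HS [s [Hs ->]]; rewrite sumF_E big_map.
elim: s Hs => [|p s IH] Hs; first by rewrite big_nil => k _.
rewrite big_cons; apply: vanishD; last by apply: IH => q Hq; apply: Hs; right.
have [_ Hsz Hy] := Hs p (or_introl erefl).
rewrite convF_E prodF_E; apply: vanish_mulr; rewrite -Hsz.
elim: (p.2) Hy => [|y t IHt] Hy; first by move=> k.
rewrite big_cons /= -add1n; apply: vanishM; last by apply: IHt => z Hz; apply: Hy; right.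
by move=> k; rewrite ltnS leqn0 => /eqP ->; apply: HS; apply: Hy; left.
Qed.

Lemma divide_tau (f : Ser) n : vanish f n -> exists r : Ser, f = r * tau ^+ n.
Proof.
move=> Hf; exists (fun m => f (m + n)%N * m`!%:R / (m + n)`!%:R).
apply: ser_ext => k; rewrite -polyEX.
change (f k = smul (fun m => f (m + n)%N * m`!%:R / (m + n)`!%:R) (polyE 'X^n) k).
rewrite (@smulE _ _ (tr (fun m => f (m + n)%N * m`!%:R / (m + n)`!%:R) k.+1) 'X^n k); first last.
- move=> j _; rewrite /polyE; field; exact: fact_neq0.
- by move=> j Hj; rewrite tr_coef_le.
rewrite coefMXn; case: ltnP => Hkn; first by rewrite mulr0 Hf.
rewrite tr_coef_le ?leq_subr // subnK //.
have := fact_neq0 k; have := fact_neq0 (k - n); move=> H1 H2; field.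
by rewrite H1 H2.
Qed.

Lemma In_nseq (T : Type) n (x y : T) : List.In y (nseq n x) -> y = x.
Proof. by elim: n => //= n IH [->|/IH]. Qed.

Lemma Ipow_vanish (f : Ser) n : vanish f n -> Ipow n f.
Proof.
move=> /divide_tau [r ->]; exists [:: (r, nseq n tau)]; split.
  move=> p [<-|//]; split => //=; first by rewrite size_nseq.
  by move=> y /= Hy; have Ey := In_nseq Hy; rewrite Ey; exact: tau0.
have -> : forall s : seq DF, sumF s = \sum_(x <- s) (x : Ser) by exact: sumF_E.
rewrite big_map big_seq1 convF_E prodF_E /=.
apply: (f_equal (fun z : Ser => r * z)); elim: n => [|n IH]; first by rewrite big_nil expr0.
by rewrite /= big_cons -IH exprS.
Qed.

Lemma Jpow_mono (c : CC) n : Jpow n (c *: tau ^+ n : Ser).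
Proof.
exists [:: ((c *: (1 : Ser)), nseq n tau)]; split.
  move=> p [<-|//]; split => //=; first by apply: CfinZ; rewrite -polyE1 -ep_zero; apply: Cfin_ep.
  by rewrite size_nseq.
  by move=> y /= Hy; have Ey := In_nseq Hy; rewrite Ey; split; [exact: tau0 | exact: Cfin_tau].
have -> : forall s : seq DF, sumF s = \sum_(x <- s) (x : Ser) by exact: sumF_E.
rewrite big_map big_seq1 convF_E prodF_E /= -scalerAl_ser mul1r.
apply: (f_equal (fun z : Ser => c *: z)); elim: n => [|n IH]; first by rewrite big_nil expr0.
by rewrite /= big_cons -IH exprS.
Qed.



Lemma sumF_map (s : seq (DF * seq DF)) :
  sumF [seq convF p.1 (prodF p.2) | p <- s] = \sum_(p <- s) ((p.1 : Ser) * \prod_(x <- p.2) (x : Ser)).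
Proof. by rewrite sumF_E big_map; apply: eq_bigr => p _; rewrite convF_E prodF_E. Qed.

Lemma powIdeal_add A S n (x y : Ser) : powIdeal A S n x -> powIdeal A S n y -> powIdeal A S n (x + y).
Proof.
move=> [s1 [H1 E1]] [s2 [H2 E2]]; subst x y; exists (s1 ++ s2); split.
  by move=> p Hp; case: (List.in_app_or _ _ _ Hp) => [/H1|/H2].
by rewrite !sumF_map big_cat.
Qed.
Lemma powIdeal_0 A S n : powIdeal A S n (0 : Ser).
Proof. by exists [::]; split. Qed.

Lemma Cfin1 : Cfin (1 : Ser).
Proof. by rewrite -polyE1 -ep_zero; apply: Cfin_ep. Qed.

Lemma Cfin_prod (s : seq DF) : (forall y, List.In y s -> Cfin y) -> Cfin (\prod_(x <- s) (x : Ser)).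
Proof.
elim: s => [|y s IH] H; first by rewrite big_nil; exact: Cfin1.
rewrite big_cons; apply: CfinM; first by apply: H; left.
by apply: IH => z Hz; apply: H; right.
Qed.

Lemma Jpow_Cfin n (x : Ser) : Jpow n x -> Cfin x.
Proof.
move=> [s [Hs Ex]]; subst x; rewrite sumF_map.
elim: s Hs => [|p s IH] Hs; first by rewrite big_nil; exact: Cfin0.
rewrite big_cons; apply: CfinD; last by apply: IH => q Hq; apply: Hs; right.
have [H1 _ H3] := Hs p (or_introl erefl).
apply: CfinM => //; apply: Cfin_prod => y Hy; exact: (proj2 (H3 y Hy)).
Qed.

Lemma Jpow_succ n (x : Ser) : Jpow n.+1 x -> Jpow n x.
Proof.
move=> [s [Hs Ex]]; subst x; rewrite sumF_map.
elim: s Hs => [|p s IH] Hs; first by rewrite big_nil; exact: powIdeal_0.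
rewrite big_cons; apply: powIdeal_add; last by apply: IH => q Hq; apply: Hs; right.
have [H1 H2 H3] := Hs p (or_introl erefl).
clear IH Hs.
case: p H1 H2 H3 => [r [|g gs]] //= H1 [H2] H3.
exists [:: (((r : Ser) * (g : Ser) : Ser), gs)]; split.
  move=> q [<-|//] /=; split => //.
    by apply: CfinM => //; exact: (proj2 (H3 g (or_introl erefl))).
  by move=> y Hy; apply: H3; right.
by rewrite sumF_map big_seq1 /= big_cons mulrA.
Qed.

Lemma In_map_inv (T U : Type) (f : T -> U) (s : seq T) (y : U) :
  List.In y (map f s) -> exists2 x, List.In x s & y = f x.
Proof.
elim: s => //= x s IH [<-|/IH [z Hz ->]]; first by exists x; [left|].
by exists z; [right|].
Qed.

Lemma J2_seqof (f : Ser) : Jpow 2 f -> exists L, f = seqof L /\ Dpsi L = 0.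
Proof.
move=> [s [Hs Ex]]; subst f; rewrite sumF_map.
elim: s Hs => [|p s IH] Hs.
  by exists [::]; rewrite big_nil seqof_nil /Dpsi big_nil.
have [L2 [E2 D2]] : exists L, \sum_(p <- s) ((p.1 : Ser) * \prod_(x <- p.2) (x : Ser)) = seqof L /\ Dpsi L = 0.
  by apply: IH => q Hq; apply: Hs; right.
have [H1 H2 H3] := Hs p (or_introl erefl).
clear IH Hs.
case: p H1 H2 H3 => [r [|g [|h [|? ?]]]] //= H1 _ H3.
have [Ig Cg] := H3 g (or_introl erefl).
have [Ih Ch] := H3 h (or_intror (or_introl erefl)).
move: H1 => /Cfin_seqof [lr Er]; move: Cg => /Cfin_seqof [lg Eg]; move: Ch => /Cfin_seqof [lh Eh].
have vg : vl lg = 0 by rewrite vl_seqof -Eg.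
have vh : vl lh = 0 by rewrite vl_seqof -Eh.
exists (prodl lr (prodl lg lh) ++ L2); split.
  rewrite seqof_cat big_cons /= E2 !seqof_prod -Er -Eg -Eh big_cons big_cons big_nil mulr1.
  by [].
rewrite Dpsi_cat D2 addr0 Dpsi_prod Dpsi_prod vl_prod vg vh; ring.
Qed.

Definition am (m : nat) : Ser := fun n => if (n < m)%N then 0 else 'i ^+ n.
Definition Tm (m : nat) : {poly CC} := \poly_(k < m) ('i ^+ k / k`!%:R).
Definition Am (m : nat) : seq (CC * {poly CC}) := [:: ('i, 1); (0, - Tm m)].

Lemma seqof_Am m : seqof (Am m) = am m.
Proof.
rewrite /Am seqof_cons seqof1 /= -polyC1 epC scale1r ep_zero polyEN.
apply: ser_ext => n; rewrite serD serN /polyE /Tm coef_poly /am /expo.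
case: ltnP => _; last by rewrite mulr0 subr0.
by rewrite mulrC divfK ?fact_neq0 // subrr.
Qed.

Lemma psi0 : psi 0 = 0.
Proof. by rewrite /psi (rmorph0 (@Num.conj_op CC)) subr0. Qed.

Lemma psii : psi 'i != 0.
Proof.
rewrite /psi (@conjCi CC).
rewrite -opprD oppr_eq0 -mulr2n -mulr_natr mulf_eq0 negb_or neq0Ci /=.
by rewrite pnatr_eq0.
Qed.

Lemma Dpsi_Am m : Dpsi (Am m) = psi 'i.
Proof.
rewrite /Dpsi /Am !big_cons big_nil.
change ((1 : {poly CC})`_0 * psi 'i + ((- Tm m)`_0 * psi 0 + 0) = psi 'i).
by rewrite psi0 mulr0 addr0 addr0 coef1 eqxx mul1r.
Qed.

Lemma not_J2_am m : ~ Jpow 2 (am m).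
Proof.
move=> /J2_seqof [L [E D]].
have := Dpsi_eq (etrans (seqof_Am m) E); rewrite D Dpsi_Am => /eqP.
by rewrite (negbTE psii).
Qed.

Lemma Cfin_am m : Cfin (am m).
Proof. by apply/Cfin_seqof; exists (Am m); rewrite seqof_Am. Qed.

Lemma vanish_am m : vanish (am m) m.
Proof. by move=> k Hk; rewrite /am /= Hk. Qed.

Lemma am_step m : am m.+1 - am m = (- 'i ^+ m / m`!%:R) *: tau ^+ m.
Proof.
apply: ser_ext => k; rewrite serB serZ -polyEX /polyE coefXn /am.
have [H|H] := ltnP k m.
  have h1 : (k < m.+1)%N = true by lia.
  have h2 : (k == m) = false by lia.
  by rewrite h1 h2 /= subr0 !mulr0.
have [->|Hne] := eqVneq k m.
  rewrite ltnSn /= mulr1 sub0r; field; exact: fact_neq0.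
have h1 : (k < m.+1)%N = false by lia.
by rewrite h1 subrr /= !mulr0.
Qed.



Lemma cosetJ_self n (a : DF) : cosetJ n a a.
Proof.
rewrite /cosetJ; have -> : addF a (oppF a) = (0 : Ser) by rewrite addF_E oppF_E subrr.
exact: powIdeal_0.
Qed.

Definition xfam (n : nat) : DF -> Prop := cosetJ n (am n).
Definition zfam (n : nat) : DF -> Prop := cosetJ n zeroF.

Lemma compat_x : is_compat xfam.
Proof.
split; first by move=> n; exists (am n) => //; exact: Cfin_am.
move=> n y; rewrite /xfam /cosetJ => H.
have -> : addF y (oppF (am n)) = ((y : Ser) - am n.+1) + (am n.+1 - am n).
  by rewrite addF_E oppF_E addrA subrK.
apply: powIdeal_add; first exact: Jpow_succ.
rewrite am_step; exact: Jpow_mono.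
Qed.

Lemma compat_z : is_compat zfam.
Proof.
split; first by move=> n; exists zeroF => //; exact: Cfin0.
by move=> n y; rewrite /zfam /cosetJ; apply: Jpow_succ.
Qed.

Definition Xc := MkCompl compat_x.
Definition Zc := MkCompl compat_z.

Lemma Jid0 (y : DF) : Jid y -> y 0%N = 0.
Proof. by case. Qed.

Lemma iota_zero (X : Compl) k (b : DF) : cval X k.+1 = cosetJ k.+1 b -> b k = 0 -> iota_hat X k = 0.
Proof.
move=> HX Hb; rewrite /iota_hat /rep.
case: constructive_indefinite_description => a [Ca Ea] /=.
have H : cosetJ k.+1 a b by rewrite -Ea HX; exact: cosetJ_self.
have := pow_vanish Jid0 H (ltnSn k).
rewrite addF_E oppF_E serB Hb sub0r => /eqP; rewrite oppr_eq0; by move/eqP.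
Qed.

Theorem proposition4p5 :
  [/\ (injective iota_hat <-> homeo iota_hat),
      (homeo iota_hat <-> (forall (n : nat) (f : DF), Jpow n f <-> (Ipow n f /\ Cfin f)))
    & ((forall (n : nat) (f : DF), Jpow n f <-> (Ipow n f /\ Cfin f)) <->
       (forall U : DF -> Prop, open_Jadic U <-> open_induced U))].
Proof.
have notinj : ~ injective iota_hat.
  move=> Hinj.
  have E : iota_hat Xc = iota_hat Zc.
    apply: functional_extensionality => k.
    rewrite (@iota_zero Xc k (am k.+1)) //; last exact: vanish_am.
    by rewrite (@iota_zero Zc k zeroF).
  have H2 := congr1 (fun X => cval X 2) (Hinj _ _ E).
  have Hx : cval Xc 2 (am 2) by exact: cosetJ_self.
  rewrite H2 /= /zfam /cosetJ in Hx.
  have E2 : addF (am 2) (oppF zeroF) = am 2 by rewrite addF_E oppF_E oppr0 addr0.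
  rewrite E2 in Hx; exact: not_J2_am Hx.
have nothomeo : ~ homeo iota_hat.
  by move=> [[g H1 H2] _]; apply: notinj; exact: can_inj H1.
have not3 : ~ (forall (n : nat) (f : DF), Jpow n f <-> (Ipow n f /\ Cfin f)).
  move=> H; apply: (@not_J2_am 2); apply/H; split; last exact: Cfin_am.
  apply: Ipow_vanish; exact: vanish_am.
have not4 : ~ (forall U : DF -> Prop, open_Jadic U <-> open_induced U).
  move=> H; pose U := fun f : DF => Jpow 2 f.
  have HU : open_Jadic U.
    split; first by move=> f; apply: Jpow_Cfin.
    move=> f Hf; exists 2%N => h Ch Hh.
    have E : h = ((addF h (oppF f) : Ser) + f : Ser) by rewrite addF_E oppF_E subrK.
    rewrite /U E; exact: powIdeal_add.
  have [V HV HUV] := proj1 (H U) HU.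
  have V0 : V zeroF by apply: (proj1 (proj1 (HUV zeroF) (powIdeal_0 _ _ _))).
  have [n Hn] := HV zeroF V0.
  have Vam : V (am n).
    apply: Hn; have -> : addF (am n) (oppF zeroF) = am n by rewrite addF_E oppF_E oppr0 addr0.
    apply: Ipow_vanish; exact: vanish_am.
  have : U (am n) by apply/HUV; split => //; exact: Cfin_am.
  exact: not_J2_am.
by split; split => H; exfalso; auto.
Qed.
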